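(* Let $P_1$ be the uniform distribution on $[0,\frac12]$, let $P_2$ be the uniform distribution on $[\frac34,1]$, and let $P=\frac34P_1+\frac14P_2$. Then the set $\{\frac14,\frac78\}$ is an optimal set of two-means for $P$, and the corresponding quantization error is $V_2=\frac{13}{768}$.
   Context: For a finite set $\alpha\subset\mathbb R$, $V(P;\alpha)=\int\min_{a\in\alpha}(x-a)^2\,dP(x)$; $V_n=\inf\{V(P;\alpha):\mathrm{card}(\alpha)\le n\}$; an optimal set of $n$-means is a set $\alpha$ with $\mathrm{card}(\alpha)\le n$ and $V(P;\alpha)=V_n$. *)

(* Defs.v *)
From Stdlib Require Import Reals List.
From Coquelicot Require Import Coquelicot.
Open Scope R_scope.

Definition E_unif (a b : R) (f : R -> R) : R := / (b - a) * RInt f a b.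

Definition E_P (f : R -> R) : R :=
  3/4 * E_unif 0 (1/2) f + 1/4 * E_unif (3/4) 1 f.

(* A finite set alpha of reals, represented by a nonempty list
   (a0 :: l); card(alpha) <= n  <->  some list of length <= n lists it. *)
Definition min_sqdist (a0 : R) (l : list R) (x : R) : R :=
  fold_right (fun a m => Rmin ((x - a)^2) m) ((x - a0)^2) l.

Definition Vq (a0 : R) (l : list R) : R := E_P (min_sqdist a0 l).

Definition Vn (n : nat) : Rbar :=
  Glb_Rbar (fun v => exists a0 l, (length (a0 :: l) <= n)%nat /\ v = Vq a0 l).

(* Main.v *)
Require Import Defs.
From Stdlib Require Import Reals List Lra Psatz FunctionalExtensionality.
From Coquelicot Require Import Coquelicot.
Open Scope R_scope.

Definition Q (c s t : R) := ((t-c)^3-(s-c)^3)/3.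

Lemma pieceQ c s t : is_RInt (fun x => (x-c)^2) s t (Q c s t).
Proof.
  unfold Q.
  replace (((t - c) ^ 3 - (s - c) ^ 3) / 3) with ((fun x => (x-c)^3/3) t - (fun x => (x-c)^3/3) s) by (simpl; field).
  apply (is_RInt_derive (fun x => (x-c)^3/3)).
  - intros x _. auto_derive; auto. field.
  - intros x _. apply continuity_pt_filterlim. apply derivable_continuous_pt. reg.
Qed.

Lemma msd2 a b x : min_sqdist a (b :: nil) x = Rmin ((x-b)^2) ((x-a)^2).
Proof. reflexivity. Qed.

Lemma piece_min a b u v : a <= b -> u <= v ->
  is_RInt (min_sqdist a (b :: nil)) u v
    (Q a u (Rmax u (Rmin ((a+b)/2) v)) + Q b (Rmax u (Rmin ((a+b)/2) v)) v).
Proof.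
  intros hab huv.
  set (c := Rmax u (Rmin ((a+b)/2) v)).
  assert (huc : u <= c) by (unfold c; apply Rmax_l).
  assert (hcv : c <= v) by (unfold c; unfold Rmax, Rmin; repeat destruct Rle_dec; lra).
  change (Q a u c + Q b c v) with (plus (Q a u c) (Q b c v)).
  apply (@is_RInt_Chasles R_NormedModule _ u c v (Q a u c) (Q b c v)).
  - apply is_RInt_ext with (fun x => (x-a)^2); [|apply pieceQ].
    intros x hx. rewrite msd2. rewrite Rmin_left in hx by lra. rewrite Rmax_right in hx by lra.
    assert (x <= (a+b)/2) by (unfold c in hx; unfold Rmax, Rmin in hx; repeat destruct Rle_dec; lra).
    rewrite Rmin_right; auto. nra.
  - apply is_RInt_ext with (fun x => (x-b)^2); [|apply pieceQ].
    intros x hx. rewrite msd2. rewrite Rmin_left in hx by lra. rewrite Rmax_right in hx by lra.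
    assert (x >= (a+b)/2) by (unfold c in hx; unfold Rmax, Rmin in hx; repeat destruct Rle_dec; lra).
    rewrite Rmin_left; auto. nra.
Qed.

Lemma Vq_formula a b : a <= b ->
  Vq a (b :: nil) =
   3/2 * (Q a 0 (Rmax 0 (Rmin ((a+b)/2) (1/2))) + Q b (Rmax 0 (Rmin ((a+b)/2) (1/2))) (1/2))
 + (Q a (3/4) (Rmax (3/4) (Rmin ((a+b)/2) 1)) + Q b (Rmax (3/4) (Rmin ((a+b)/2) 1)) 1).
Proof.
  intros hab. unfold Vq, E_P, E_unif.
  rewrite (is_RInt_unique _ _ _ _ (piece_min a b 0 (1/2) hab ltac:(lra))).
  rewrite (is_RInt_unique _ _ _ _ (piece_min a b (3/4) 1 hab ltac:(lra))).
  field.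
Qed.

Lemma pos_fac k x : 0 < k -> 0 <= k * x -> 0 <= x.
Proof. intros hk h. destruct (Rle_dec 0 x); auto. exfalso. assert (k * x < 0) by (apply Rmult_pos_neg; lra). lra. Qed.

Lemma Vq_lb a b : a <= b -> 13/768 <= Vq a (b :: nil).
Proof.
  intros hab. rewrite Vq_formula by auto.
  set (m := (a+b)/2).
  assert (Hm : m = (a+b)/2) by reflexivity. clearbody m.
  destruct (Rle_dec m 0).
  { rewrite (Rmin_left m) by lra. rewrite Rmax_left by lra.
    rewrite (Rmin_left m) by lra. rewrite Rmax_left by lra. unfold Q.
    match goal with |- _ <= ?V => replace V with ((3/4)*((b-1/4)^2+1/48)+(1/4)*((b-7/8)^2+1/192)) by field end.
    pose proof (pow2_ge_0 (b-1/4)); pose proof (pow2_ge_0 (b-7/8)); lra. }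
  destruct (Rle_dec m (1/2)).
  { rewrite (Rmin_left m) by lra. rewrite Rmax_right by lra.
    rewrite (Rmin_left m) by lra. rewrite Rmax_left by lra. unfold Q.
    match goal with |- _ <= ?V =>
      assert (E : (1 - 3*m/2) * (V - 13/768) =
        3/2 * (1 - 3*m/2) * m * (a - m/2)^2 + ((1-3*m/2)*b - (13/32 - 3*m^2/4))^2
        + (1/2 - m) * (3/8*(m - 9/16)^2 + (75/512 - 3/8*(9/16)^2))) by field end.
    assert (P1 : 0 <= 3/2 * (1 - 3*m/2) * m * (a - m/2)^2).
    { apply Rmult_le_pos; [|apply pow2_ge_0]. apply Rmult_le_pos; [|lra]. apply Rmult_le_pos; lra. }
    assert (P2 : 0 <= (1/2 - m) * (3/8*(m - 9/16)^2 + (75/512 - 3/8*(9/16)^2))).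
    { apply Rmult_le_pos; nra. }
    pose proof (pow2_ge_0 ((1-3*m/2)*b - (13/32 - 3*m^2/4))).
    match goal with E : ?k * (?V - _) = _ |- _ =>
      cut (0 <= V - 13/768); [lra|]; apply (pos_fac k); [lra|]; rewrite E end.
    lra. }
  destruct (Rle_dec m (3/4)).
  { rewrite (Rmin_right m) by lra. rewrite Rmax_right by lra.
    rewrite (Rmin_left m) by lra. rewrite Rmax_left by lra. unfold Q.
    match goal with |- _ <= ?V => replace V with ((3/4)*((a-1/4)^2+1/48)+(1/4)*((b-7/8)^2+1/192)) by field end.
    pose proof (pow2_ge_0 (a-1/4)); pose proof (pow2_ge_0 (b-7/8)); lra. }
  destruct (Rle_dec m 1).
  { rewrite (Rmin_right m) by lra. rewrite Rmax_right by lra.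
    rewrite (Rmin_left m) by lra. rewrite Rmax_right by lra. unfold Q.
    match goal with |- _ <= ?V =>
      assert (E : m * (V - 13/768) =
        m * (1 - m) * (b - (1+m)/2)^2 + (m*a - (m^2/2 - 3/32))^2
        + (m - 3/4) * (m^2/4 + m/32 + 3/256)) by field end.
    assert (P1 : 0 <= m * (1 - m) * (b - (1+m)/2)^2).
    { apply Rmult_le_pos; [|apply pow2_ge_0]. apply Rmult_le_pos; lra. }
    assert (P2 : 0 <= (m - 3/4) * (m^2/4 + m/32 + 3/256)).
    { apply Rmult_le_pos; nra. }
    pose proof (pow2_ge_0 (m*a - (m^2/2 - 3/32))).
    match goal with E : ?k * (?V - _) = _ |- _ =>
      cut (0 <= V - 13/768); [lra|]; apply (pos_fac k); [lra|]; rewrite E end.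
    lra. }
  { rewrite (Rmin_right m) by lra. rewrite Rmax_right by lra.
    rewrite (Rmin_right m) by lra. rewrite Rmax_right by lra. unfold Q.
    match goal with |- _ <= ?V => replace V with ((3/4)*((a-1/4)^2+1/48)+(1/4)*((a-7/8)^2+1/192)) by field end.
    pose proof (pow2_ge_0 (a-1/4)); pose proof (pow2_ge_0 (a-7/8)); lra. }
Qed.

Lemma Vq_val : Vq (1/4) (7/8 :: nil) = 13/768.
Proof.
  rewrite Vq_formula by lra.
  replace ((1/4 + 7/8)/2) with (9/16) by field.
  rewrite (Rmin_right (9/16)) by lra. rewrite Rmax_right by lra.
  rewrite (Rmin_left (9/16)) by lra. rewrite Rmax_left by lra.
  unfold Q. field.
Qed.

Lemma Vq_lb_all a0 l : (length (a0 :: l) <= 2)%nat -> 13/768 <= Vq a0 l.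
Proof.
  intros hl. destruct l as [|b [|c l']].
  - replace (Vq a0 nil) with (Vq a0 (a0 :: nil)).
    + apply Vq_lb; lra.
    + unfold Vq. f_equal. apply functional_extensionality. intros x.
      rewrite msd2. simpl. apply Rmin_left. lra.
  - destruct (Rle_dec a0 b). { apply Vq_lb; auto. }
    replace (Vq a0 (b :: nil)) with (Vq b (a0 :: nil)).
    + apply Vq_lb; lra.
    + unfold Vq. f_equal. apply functional_extensionality. intros x.
      rewrite !msd2. apply Rmin_comm.
  - simpl in hl. lia.
Qed.

Theorem lemma3p3 :
  Vn 2 = Finite (Vq (1/4) (7/8 :: nil)) /\ Vq (1/4) (7/8 :: nil) = 13/768.
Proof.
  split; [|apply Vq_val].
  unfold Vn. apply is_glb_Rbar_unique. split.
  - intros v [a0 [l [hl ->]]]. rewrite Vq_val. simpl. apply Vq_lb_all; auto.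
  - intros y hy. apply hy. exists (1/4), (7/8 :: nil). split; auto.
Qed.
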